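(* Let $G$ be the graph representation of a schema category and let $F$ be a set of functional dependencies. Let $G_1$ be the first reduced representation (1RR) of $G$ with respect to $F$, and let $\mathcal{R}=\{R_1,\dots,R_p\}$ be the relational schema obtained from $G_1$ by the relational mapping procedure described in the context. Then each relation schema $R_i\in\mathcal{R}$ is in Boyce–Codd normal form (with respect to the functional dependencies implied by the category and $F$).
   Context: Graph representation of a category: a finite directed graph $G$ whose nodes are objects (sets) of three kinds—entity objects, relationship objects and attribute objects—and whose arrows $X\to Y$ are functions, each read as a functional dependency (FD) $X\to Y$. Each relationship object $O$ has a set $\pi(O)$ of projection objects, with a projection arrow $O\to A$ for each $A\in\pi(O)$. The category is thin (at most one arrow between any two objects), so all diagrams commute. Relevant closure $(G,F)^+$: let $FD(G)$ consist of the FD $X\to Y$ for each arrow of $G$ together with, for each relationship object $X$ with projection objects $A_1,\dots,A_n$, the FDs $X\to A_1\cdots A_n$ and $A_1\cdots A_n\to X$; let $D=FD(G)\cup F$. For each left-hand side $X$ of an FD in $D$: if $X$ is not a node of $G$, add it as a node (a composite left-hand side becoming a new node with projection arrows to its components); compute the attribute closure $X^+$ from $D$ using Armstrong's axioms (reflexivity/projection, augmentation, transitivity/composition); for every node $Y$ of $G$ with $Y\in X^+$, add an arrow $X\to Y$ if none exists. A graph $G$ covers $G'$ (w.r.t. $F$) if every arrow of $G'$ is an arrow of $(G,F)^+$; $G$ and $G'$ are equivalent if each covers the other. First reduced representation (1RR): compute $(G,F)^+$; then for each arrow $f$ in turn, remove $f$ if the graph with $f$ deleted is equivalent to the current graph;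 return the resulting graph. Relational mapping: for a node $O$ let $\lambda(O)$ be its name, $outNbr(O)$ the set of nodes $N$ with an arrow $O\to N$, and $bin(O)$ the set of nodes $N$ with arrows both $O\to N$ and $N\to O$. For each not-yet-processed node $O$ having at least one outgoing arrow, create a relation $R$ whose attribute set $sort(R)$ is initially $\{SK\}$ (a surrogate key) if $O$ is an entity or relationship object and $\{\lambda(O)\}$ otherwise; then apply AddNeighbours$(R,O)$: for each $N\in outNbr(O)$, add $\lambda(N)$ to $sort(R)$ (as a foreign key referencing the surrogate key of the relation of $N$ if $N$ is an entity or relationship object), and if $N\in bin(O)$, recursively apply AddNeighbours$(R,N)$ and mark $N$ processed; mark $O$ processed. Finally (cleaning), remove from each relation any surrogate key not referenced by another relation, and remove any relation $R_i$ with $sort(R_i)\subseteq sort(R_j)$ for another relation $R_j$. A relation schema $R$ is in Boyce–Codd normal form (BCNF) if for every nontrivial FD $A\to B$ holding on $R$, $A$ is a superkey of $R$. *)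

(* Defs.v *)
From mathcomp Require Import all_boot.
Set Implicit Arguments. Unset Strict Implicit. Unset Printing Implicit Defensive.

Inductive okind := Entity | Relationship | Attribute.
Definition is_rel (k : okind) : bool := if k is Relationship then true else false.
(* entity or relationship object (these get surrogate keys) *)
Definition is_er (k : okind) : bool := if k is Attribute then false else true.

Section Defs.
Variable U : finType.   (* the (finite) set of objects of the schema category *)

Record sgraph := SGraph {
  snodes  : {set U};
  sarrows : {set U * U};           (* arrows X -> Y (thin: at most one)    *)
  skind   : U -> okind;
  sproj   : U -> {set U}
}.

Definition wf_sgraph (G : sgraph) : Prop :=
  sarrows G \subset setX (snodes G) (snodes G) /\
  forall O, O \in snodes G -> is_rel (skind G O) ->
    [/\ sproj G O != set0, sproj G O \subset snodes G &
        forall A, A \in sproj G O -> (O, A) \in sarrows G].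

Definition fd := ({set U} * {set U})%type.

Definition wf_fds (G : sgraph) (F : {set fd}) : Prop :=
  forall f, f \in F -> f.1 != set0 /\ f.1 :|: f.2 \subset snodes G.

(* Working graphs.  A node is a set of objects: an original object O is the *)
(* node [set O]; a composite left-hand side {A1,...,An} is the node          *)
(* [set A1; ...; An].  Functionally, a node stands for its set of objects.  *)
Definition node := {set U}.

Record graph := Graph {
  nodes  : {set node};
  arrows : {set node * node};
  kind   : node -> okind;
  proj   : node -> {set node}
}.

Definition embed (G : sgraph) : graph :=
  Graph [set [set u] | u in snodes G]
        [set ([set p.1], [set p.2]) | p in sarrows G]
        (fun X => if [pick u in X] is Some u then skind G u else Attribute)
        (fun X => if [pick u in X] is Some u then [set [set a] | a in sproj G u]
                  else set0).

Definition FDg (H : graph) : {set fd} :=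
  [set (p.1, p.2) | p in arrows H] :|:
  [set (X, \bigcup_(A in proj H X) A) | X in nodes H & is_rel (kind H X)] :|:
  [set (\bigcup_(A in proj H X) A, X) | X in nodes H & is_rel (kind H X)].

(* Attribute closure X^+ w.r.t. a set D of FDs (least superset of X closed *)
(* under D; this is the closure computed with Armstrong's axioms).         *)
Definition fd_closed (D : {set fd}) (S : {set U}) : bool :=
  [forall f in D, (f.1 \subset S) ==> (f.2 \subset S)].
Definition attr_closure (D : {set fd}) (X : {set U}) : {set U} :=
  \bigcap_(S : {set U} | (X \subset S) && fd_closed D S) S.

Definition implies (D : {set fd}) (X Y : {set U}) : bool :=
  Y \subset attr_closure D X.

Definition gclosure (F : {set fd}) (H : graph) : graph :=
  let D := FDg H :|: F in
  let lhs := [set f.1 | f in D] in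
  let new := lhs :\: nodes H in
  let N' := nodes H :|: lhs in
  Graph N'
    (arrows H :|:
     [set p | (p.1 \in new) && [exists u in p.1, p.2 == [set u]]] :|:
     [set p | [&& p.1 \in lhs, p.2 \in N' & p.2 \subset attr_closure D p.1]])
    (fun X => if X \in nodes H then kind H X else Relationship)
    (fun X => if X \in nodes H then proj H X else [set [set u] | u in X]).

Definition covers (F : {set fd}) (H H' : graph) : bool :=
  arrows H' \subset arrows (gclosure F H).
Definition gequiv (F : {set fd}) (H H' : graph) : bool :=
  covers F H H' && covers F H' H.

Definition del_arrow (H : graph) (f : node * node) : graph :=
  Graph (nodes H) (arrows H :\ f) (kind H) (proj H).

(* First reduced representation, for a given order [ord] on the arrows of  *)
(* (G,F)^+ in which they are examined.                                     *)
Definition rr1_from (F : {set fd}) (H0 : graph) (ord : seq (node * node)) : graph :=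
  foldl (fun H f => if gequiv F (del_arrow H f) H then del_arrow H f else H) H0 ord.

(* Relational mapping.  Attributes of relations: inl O is the surrogate key *)
(* SK of the relation created for node O; inr N is the name lambda(N).     *)
Definition attr := (node + node)%type.

Definition outNbr (H : graph) (O : node) : {set node} := [set N | (O, N) \in arrows H].
Definition binrel (H : graph) : rel node :=
  fun a b => ((a, b) \in arrows H) && ((b, a) \in arrows H).
(* nodes visited by the recursive AddNeighbours starting from O *)
Definition bcomp (H : graph) (O : node) : {set node} := [set N | connect (binrel H) O N].

Definition init_sort (H : graph) (O : node) : {set attr} :=
  if is_er (kind H O) then [set inl O] else [set inr O].

Definition rel_sort (H : graph) (O : node) : {set attr} :=
  init_sort H O :|: [set inr N | N in \bigcup_(M in bcomp H O) outNbr H M].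

(* a created relation: (owner O, nodes processed with it, sort) *)
Definition rel3 := (node * {set node} * {set attr})%type.

Definition map_step (H : graph) (st : {set node} * seq rel3) (O : node) :=
  if (O \notin st.1) && (outNbr H O != set0)
  then (st.1 :|: bcomp H O, rcons st.2 (O, bcomp H O, rel_sort H O))
  else st.

Definition raw_map (H : graph) (nord : seq node) : seq rel3 :=
  (foldl (map_step H) (set0, [::]) nord).2.

Definition r0 : rel3 := (set0, set0, set0).

(* the surrogate key of relation i is referenced by another relation j:     *)
(* j contains the foreign key lambda(N) for an entity/relationship node N   *)
(* whose relation is relation i.                                           *)
Definition referenced (H : graph) (rs : seq rel3) (i : nat) : bool :=
  has (fun j => (j != i) &&
         [exists N in (nth r0 rs i).1.2,
            is_er (kind H N) && (inr N \in (nth r0 rs j).2)])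
      (iota 0 (size rs)).

Definition clean_keys (H : graph) (rs : seq rel3) : seq {set attr} :=
  [seq (if referenced H rs i then (nth r0 rs i).2
        else (nth r0 rs i).2 :\ inl (nth r0 rs i).1.1) | i <- iota 0 (size rs)].

Definition clean_subsumed (ss : seq {set attr}) : seq {set attr} :=
  [seq nth set0 ss i | i <- iota 0 (size ss) &
     ~~ has (fun j => (j != i) &&
              ((nth set0 ss i \proper nth set0 ss j) ||
               ((nth set0 ss i == nth set0 ss j) && (j < i))))
            (iota 0 (size ss))].

Definition relmap (H : graph) (nord : seq node) : seq {set attr} :=
  clean_subsumed (clean_keys H (raw_map H nord)).

(* BCNF.  An attribute denotes a set of objects: SK of O's relation denotes *)
(* O, lambda(N) denotes N.                                                 *)
Definition attr_obj (a : attr) : node := match a with inl X => X | inr N => N end.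
Definition attr_sem (A : {set attr}) : {set U} := \bigcup_(a in A) attr_obj a.

Definition BCNF (D : {set fd}) (R : {set attr}) : Prop :=
  forall A B : {set attr}, A \subset R -> B \subset R -> ~~ (B \subset A) ->
    implies D (attr_sem A) (attr_sem B) -> implies D (attr_sem A) (attr_sem R).

End Defs.

(* Main.v *)
Require Import Defs.
From mathcomp Require Import all_boot.
Set Implicit Arguments. Unset Strict Implicit. Unset Printing Implicit Defensive.

Section Cl.
Variable U : finType.
Implicit Types (D : {set fd U}) (X Y S : {set U}).

Lemma cl_sup D X : X \subset attr_closure D X.
Proof. by apply/bigcapsP => S /andP[]. Qed.

Lemma cl_min D X S : X \subset S -> fd_closed D S -> attr_closure D X \subset S.
Proof. by move=> h1 h2; apply: bigcap_inf; rewrite h1 h2. Qed.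

Lemma cl_closed D X : fd_closed D (attr_closure D X).
Proof.
apply/forall_inP => f fD; apply/implyP => h1.
apply/bigcapsP => S /andP[XS cS].
have := forall_inP cS f fD; move/implyP; apply.
apply: subset_trans h1 _; exact: cl_min XS cS.
Qed.

Lemma cl_fd D X f : f \in D -> f.1 \subset attr_closure D X -> f.2 \subset attr_closure D X.
Proof. by move=> fD h; have := forall_inP (cl_closed D X) f fD; move/implyP; apply. Qed.

Lemma cl_trans D X Y : Y \subset attr_closure D X -> attr_closure D Y \subset attr_closure D X.
Proof. by move=> h; apply: cl_min h (cl_closed _ _). Qed.

Lemma cl_mono D X Y : X \subset Y -> attr_closure D X \subset attr_closure D Y.
Proof. by move=> h; apply: cl_trans; apply: subset_trans h (cl_sup _ _). Qed.

Lemma cl_fdin D f : f \in D -> f.2 \subset attr_closure D f.1.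
Proof. by move=> fD; apply: cl_fd fD (cl_sup _ _). Qed.

Definition entails D1 D2 := forall f, f \in D2 -> f.2 \subset attr_closure D1 f.1.

Lemma entails_cl D1 D2 X : entails D1 D2 -> attr_closure D2 X \subset attr_closure D1 X.
Proof.
move=> h; apply: cl_min (cl_sup _ _) _.
apply/forall_inP => f fD; apply/implyP => h1.
apply: subset_trans (h f fD) _; exact: cl_trans.
Qed.

Lemma entails_sub D1 D2 : D2 \subset D1 -> entails D1 D2.
Proof. by move=> h f fD; apply: cl_fdin; apply: (subsetP h). Qed.

Lemma entails_trans D1 D2 D3 : entails D1 D2 -> entails D2 D3 -> entails D1 D3.
Proof. by move=> h1 h2 f fD; apply: subset_trans (h2 f fD) (entails_cl _ h1). Qed.

Lemma conn_cl (e : rel (node U)) (P : pred (node U)) D x y :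
  (forall a b, P a -> e a b -> P b /\ b \subset attr_closure D a) ->
  P x -> connect e x y -> y \subset attr_closure D x.
Proof.
move=> H Px /connectP[p pth ->]; elim: p x pth Px => [|z p IH] x /=.
  by move=> _ _; apply: cl_sup.
move=> /andP[exz pth] Px; have [Pz hz] := H x z Px exz.
apply: subset_trans (IH z pth Pz) _; exact: cl_trans.
Qed.

Lemma bigcup_single (S : {set U}) : \bigcup_(A in [set [set u] | u in S]) A = S.
Proof.
apply/setP => x; apply/bigcupP/idP => [[A /imsetP[u uS ->]]|xS].
  by rewrite inE => /eqP ->.
by exists [set x]; [apply: imset_f | rewrite inE].
Qed.

End Cl.

Section Gr.
Variable U : finType.
Variable F : {set fd U}.
Implicit Types (H : graph U).

Lemma closure_implied H p : p \in arrows (gclosure F H) ->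
  p.2 \subset attr_closure (FDg H :|: F) p.1.
Proof.
rewrite /gclosure /= !inE => /orP[/orP[pH|]|].
- have h : (p.1, p.2) \in FDg H :|: F.
    by rewrite /FDg !in_setU (imset_f (fun q => (q.1, q.2)) pH).
  exact: (cl_fdin h).
- move=> /andP[_ /exists_inP[u up /eqP ->]].
  by apply: subset_trans (cl_sup _ _); rewrite sub1set.
- by move=> /and3P[_ _].
Qed.

Lemma FDg_sub H H' : nodes H = nodes H' -> kind H = kind H' -> proj H = proj H' ->
  arrows H \subset arrows H' -> FDg H \subset FDg H'.
Proof.
move=> eN eK eP sA; rewrite /FDg eN eK eP; apply/subsetP => g.
rewrite !inE => /orP[/orP[/imsetP[p pA ->]|h]|h].
- by apply/orP; left; apply/orP; left; apply/imsetP; exists p => //; apply: (subsetP sA).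
- by rewrite h orbT.
- by rewrite h orbT.
Qed.

Lemma gclosure_mono H H' : nodes H = nodes H' -> kind H = kind H' -> proj H = proj H' ->
  arrows H \subset arrows H' -> arrows (gclosure F H) \subset arrows (gclosure F H').
Proof.
move=> eN eK eP sA.
have sD : FDg H :|: F \subset FDg H' :|: F by apply: setSU; apply: FDg_sub.
have sL : [set f.1 | f in FDg H :|: F] \subset [set f.1 | f in FDg H' :|: F].
  by apply: imsetS.
rewrite /gclosure /=; apply/subsetP => p; rewrite !inE.
move=> /orP[/orP[pH|/andP[p1 hex]]|/and3P[p1 p2 p3]].
- by rewrite (subsetP sA _ pH).
- move: p1; rewrite eN => /andP[-> p1]; rewrite (subsetP sL _ p1) hex.
  by rewrite orbT.
- apply/orP; right; apply/and3P; split.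
  + exact: (subsetP sL _ p1).
  + move: p2; rewrite eN => /orP[->//|p2]; by rewrite (subsetP sL _ p2) orbT.
  + apply: subset_trans p3 _; apply: entails_cl; exact: entails_sub.
Qed.

Lemma rr1_shape ord H : let r := rr1_from F H ord in
  [/\ nodes r = nodes H, kind r = kind H, proj r = proj H & arrows r \subset arrows H].
Proof.
elim: ord H => [|f ord IH] H /=; first by split.
case: ifP => _.
  have [-> -> -> s] := IH (del_arrow H f); split => //.
  by apply: subset_trans s _; apply: subsetDl.
have [-> -> -> s] := IH H; by split.
Qed.

Lemma step_entails H f : gequiv F (del_arrow H f) H ->
  entails (FDg (del_arrow H f) :|: F) (FDg H :|: F).
Proof.
move=> /andP[c1 _] g; rewrite !inE => /orP[/orP[/orP[/imsetP[p pA ->]|h]|h]|h] /=.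
- exact: closure_implied (subsetP c1 p pA).
- by apply: cl_fdin; rewrite !inE h !orbT.
- by apply: cl_fdin; rewrite !inE h !orbT.
- by apply: cl_fdin; rewrite !inE h !orbT.
Qed.

Lemma rr1_entails ord H : entails (FDg (rr1_from F H ord) :|: F) (FDg H :|: F).
Proof.
elim: ord H => [|f ord IH] H /=; first by apply: entails_sub.
case: ifP => h; last exact: IH.
apply: entails_trans (IH _) _; exact: step_entails.
Qed.

Lemma rr1_kept ord H f : f \in ord -> f \in arrows (rr1_from F H ord) ->
  f \notin arrows (gclosure F (del_arrow (rr1_from F H ord) f)).
Proof.
elim: ord H => [|g ord IH] H //=.
rewrite inE; case fo: (f \in ord); first by rewrite orbT => _; apply: IH.
rewrite orbF => /eqP <-.
case: ifP => hq fr.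
  have [_ _ _ sA] := rr1_shape ord (del_arrow H f).
  by move: (subsetP sA f fr); rewrite /= !inE eqxx.
have [eN eK eP sA] := rr1_shape ord H.
move: eN eK eP sA fr; set r := rr1_from _ _ _ => eN eK eP sA fr.
apply/negP => fc; move/negbT/negP: hq; apply.
have sub : arrows (gclosure F (del_arrow r f)) \subset arrows (gclosure F (del_arrow H f)).
  apply: gclosure_mono => //=; exact: setSD.
apply/andP; split; apply/subsetP => p.
- move=> pH; case: (eqVneq p f) => [->|pf]; first exact: (subsetP sub).
  by rewrite /gclosure /= !inE pf pH.
- by rewrite /gclosure /= !inE => /andP[_ ->].
Qed.

End Gr.

Section H0.
Variable U : finType.
Variable G : sgraph U.
Variable F : {set fd U}.
Hypothesis wfG : wf_sgraph G.
Hypothesis wfF : wf_fds G F.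

Lemma pick1 (u : U) : [pick v in [set u]] = Some u.
Proof. by case: pickP => [v|/(_ u)]; rewrite inE ?eqxx // => /eqP ->. Qed.

Lemma embed_kind u : kind (embed G) [set u] = skind G u.
Proof. by rewrite /= pick1. Qed.
Lemma embed_proj u : proj (embed G) [set u] = [set [set a] | a in sproj G u].
Proof. by rewrite /= pick1. Qed.

Lemma D0_lhs f : f \in FDg (embed G) :|: F -> f.1 != set0 /\ f.1 \subset snodes G.
Proof.
have [sa wr] := wfG.
rewrite /FDg !inE => /orP[/orP[/orP[|]|]|fF].
- move=> /imsetP[q /imsetP[p pa ->] ->] /=.
  have := subsetP sa p pa; rewrite inE => /andP[p1 _].
  by rewrite sub1set p1 -card_gt0 cards1.
- move=> /imsetP[X]; rewrite inE => /andP[/imsetP[u uS ->]]; rewrite embed_kind => hr -> /=.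
  by rewrite sub1set uS -card_gt0 cards1.
- move=> /imsetP[X]; rewrite inE => /andP[/imsetP[u uS ->]]; rewrite embed_kind => hr -> /=.
  rewrite pick1 bigcup_single.
  by have [h1 h2 _] := wr u uS hr; split.
- have [h1 h2] := wfF fF; split => //; apply: subset_trans h2; exact: subsetUl.
Qed.

Lemma H0_nodes X : X \in nodes (gclosure F (embed G)) -> X != set0.
Proof.
rewrite /= !inE => /orP[/imsetP[u _ ->]|/imsetP[f fD ->]].
  by rewrite -card_gt0 cards1.
by have [] := D0_lhs fD.
Qed.

Lemma H0_targets p : p \in arrows (gclosure F (embed G)) -> p.2 \in nodes (gclosure F (embed G)).
Proof.
have [sa wr] := wfG.
rewrite /gclosure /= !inE => /orP[/orP[|]|].
- move=> /imsetP[q qa ->] /=; have := subsetP sa q qa; rewrite inE => /andP[_ q2].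
  by rewrite (imset_f (fun u => [set u]) q2).
- move=> /andP[/andP[_ /imsetP[f fD e1]] /exists_inP[u up /eqP ->]].
  have [_ s] := D0_lhs fD; rewrite -e1 in s.
  by rewrite (imset_f (fun u => [set u]) (subsetP s u up)).
- by move=> /and3P[_ -> _].
Qed.

Lemma cl0 : attr_closure (FDg (embed G) :|: F) set0 = set0.
Proof.
apply/eqP; rewrite eqEsubset sub0set andbT; apply: cl_min => //.
apply/forall_inP => f fD; apply/implyP; rewrite subset0 => /eqP e.
by have [] := D0_lhs fD; rewrite e eqxx.
Qed.

Lemma entails_H0 : entails (FDg (embed G) :|: F) (FDg (gclosure F (embed G)) :|: F).
Proof.
move=> g; rewrite [in X in X -> _]/FDg !inE => /orP[/orP[/orP[|]|]|gF].
- move=> /imsetP[p pA ->] /=; exact: closure_implied pA.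
- move=> /imsetP[X]; rewrite inE => /andP[XN hr] -> /=.
  move: hr; rewrite /=; case: ifP => XE hr.
    have h : (X, \bigcup_(A in proj (embed G) X) A) \in FDg (embed G) :|: F.
      rewrite /FDg !in_setU; apply/orP; left; apply/orP; left; apply/orP; right.
      by apply/imsetP; exists X => //; rewrite inE XE.
    exact: (cl_fdin h).
  by rewrite bigcup_single; apply: cl_sup.
- move=> /imsetP[X]; rewrite inE => /andP[XN hr] -> /=.
  move: hr; rewrite /=; case: ifP => XE hr.
    have h : (\bigcup_(A in proj (embed G) X) A, X) \in FDg (embed G) :|: F.
      rewrite /FDg !in_setU; apply/orP; left; apply/orP; right.
      by apply/imsetP; exists X => //; rewrite inE XE.
    exact: (cl_fdin h).
  by rewrite bigcup_single; apply: cl_sup.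
- by apply: cl_fdin; rewrite inE gF orbT.
Qed.

Lemma FDgE_sub : FDg (embed G) \subset FDg (gclosure F (embed G)).
Proof.
apply/subsetP => g; rewrite /FDg !in_setU => /orP[/orP[/imsetP[p pA ->]|/imsetP[X XP ->]]|/imsetP[X XP ->]].
- apply/orP; left; apply/orP; left; apply/imsetP; exists p => //.
  by rewrite /gclosure /= !inE pA.
- move: XP; rewrite inE => /andP[XN hr].
  apply/orP; left; apply/orP; right; apply/imsetP; exists X.
    rewrite inE; apply/andP; split; first by apply/setUP; left; exact: XN.
    rewrite /=; case: ifP => h; first exact: hr.
    by move/negbT/negP: h; case; exact: XN.
  rewrite /=; case: ifP => h //.
  by move/negbT/negP: h; case; exact: XN.
- move: XP; rewrite inE => /andP[XN hr].
  apply/orP; right; apply/imsetP; exists X.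
    rewrite inE; apply/andP; split; first by apply/setUP; left; exact: XN.
    rewrite /=; case: ifP => h; first exact: hr.
    by move/negbT/negP: h; case; exact: XN.
  rewrite /=; case: ifP => h //.
  by move/negbT/negP: h; case; exact: XN.
Qed.

End H0.

Section RM.
Variable U : finType.
Variable H : graph U.

Lemma fold_inv s (st : {set node U} * seq (rel3 U)) :
  (forall x, x \in st.2 -> x.2 = rel_sort H x.1.1) ->
  forall x, x \in (foldl (map_step H) st s).2 -> x.2 = rel_sort H x.1.1.
Proof.
elim: s st => [|O s IH] st //= hst; apply: IH.
rewrite /map_step; case: ifP => _ //= x.
by rewrite mem_rcons inE => /orP[/eqP ->|]; [|apply: hst].
Qed.

Lemma relmap_sub nord R : R \in relmap H nord -> exists O, R \subset rel_sort H O.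
Proof.
rewrite /relmap /clean_subsumed => /mapP[i]; rewrite mem_filter => /andP[_].
rewrite mem_iota add0n => /andP[_ hi] ->.
move: (mem_nth set0 hi); rewrite /clean_keys => /mapP[j].
rewrite mem_iota add0n => /andP[_ hj] ->.
have xin := mem_nth (r0 U) hj.
have e : (nth (r0 U) (raw_map H nord) j).2 = rel_sort H (nth (r0 U) (raw_map H nord) j).1.1.
  by apply: (fold_inv (s := nord) (st := (set0, [::]))) xin.
exists (nth (r0 U) (raw_map H nord) j).1.1; rewrite -/(raw_map H nord) in e *.
case: ifP => _; rewrite -e //; exact: subsetDl.
Qed.

End RM.

Lemma init_obj (U : finType) (H : graph U) O r : r \in init_sort H O -> attr_obj r = O.
Proof. by rewrite /init_sort; case: ifP => _; rewrite inE => /eqP ->. Qed.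

Theorem theorem7p1 (U : finType) (G : sgraph U) (F : {set fd U}) :
  wf_sgraph G -> wf_fds G F ->
  forall aord : seq (node U * node U),
    perm_eq aord (enum (arrows (gclosure F (embed G)))) ->
  forall nord : seq (node U),
    perm_eq nord (enum (nodes (rr1_from F (gclosure F (embed G)) aord))) ->
  forall R, R \in relmap (rr1_from F (gclosure F (embed G)) aord) nord ->
    BCNF (FDg (embed G) :|: F) R.
Proof.
move=> wfG wfF aord hperm nord _ R hR.
have [eN eK eP sA] := rr1_shape F aord (gclosure F (embed G)).
set H0 := gclosure F (embed G) in hperm hR eN eK eP sA *.
set H1 := rr1_from F H0 aord in hR eN eK eP sA *.
set D0 := FDg (embed G) :|: F.
have [O hRO] := relmap_sub hR.
set C := bcomp H1 O in hRO.
have impH1 : forall a b, (a, b) \in arrows H1 -> b \subset attr_closure D0 a.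
  by move=> a b ab; apply: (closure_implied (subsetP sA _ ab)).
have symb : symmetric (binrel H1) by move=> a b; rewrite /binrel andbC.
have csym := sym_connect_sym symb.
have connD0 : forall x y, connect (binrel H1) x y -> y \subset attr_closure D0 x.
  move=> x y; apply: (conn_cl (P := predT)) => // a b _ /andP[ab _]; split => //.
  exact: impH1.
have inC : forall M, M \in C -> connect (binrel H1) O M by move=> M; rewrite inE.
have OM : forall M, M \in C -> O \subset attr_closure D0 M.
  by move=> M MC; apply: connD0; rewrite csym; apply: inC.
have semR : attr_sem R \subset attr_closure D0 O.
  apply/bigcupsP => r rR; have := subsetP hRO r rR.
  rewrite /rel_sort inE => /orP[/init_obj ->|/imsetP[N /bigcupP[M MC NM] ->]] /=.
    exact: cl_sup.
  apply: subset_trans (impH1 M N _) _; first by move: NM; rewrite inE.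
  by apply: cl_trans; apply: connD0; apply: inC.
move=> A B sAR sBR nBA himp; rewrite /implies.
suff hO : O \subset attr_closure D0 (attr_sem A).
  by apply: subset_trans semR (cl_trans hO).
have /subsetPn[b bB bA] := nBA.
have hb : attr_obj b \subset attr_closure D0 (attr_sem A).
  apply: subset_trans himp; exact: (bigcup_sup b bB).
have := subsetP hRO b (subsetP sBR b bB).
rewrite /rel_sort inE => /orP[/init_obj e|/imsetP[N /bigcupP[M MC]]]; first by rewrite -e.
rewrite inE => fM eb; subst b.
case NC : (N \in C).
  by apply: subset_trans (OM N NC) (cl_trans hb).
set f := (M, N).
have fH1 : f \in arrows H1 := fM.
pose H' := del_arrow H1 f.
pose D' := FDg H' :|: F.
have arrD' : forall x y, (x, y) \in arrows H1 -> y != N -> (x, y) \in D'.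
  move=> x y xy yN; rewrite /D' /FDg !in_setU; apply/orP; left; apply/orP; left; apply/orP; left.
  apply/imsetP; exists (x, y) => //; rewrite /H' /= !inE xy andbT.
  by apply/eqP => -[_ ey]; rewrite ey eqxx in yN.
have eD' : entails D0 D'.
  apply: entails_trans (@entails_H0 U G F) (entails_sub _).
  apply: setSU; apply: FDg_sub => //=.
  by apply: subset_trans (subsetDl _ _) sA.
have connD' : forall x y, x \in C -> connect (binrel H1) x y -> y \subset attr_closure D' x.
  move=> x y xC; apply: (conn_cl (P := mem C)) => // a b' aC /andP[ab ba].
  have bC : b' \in C.
    rewrite inE; apply: connect_trans (inC a aC) (connect1 _); by rewrite /binrel ab ba.
  split => //; apply: (cl_fdin (arrD' a b' ab _)).
  by apply/eqP => eb; rewrite -eb bC in NC.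
have connC : forall x y, x \in C -> y \in C -> connect (binrel H1) x y.
  by move=> x y xC yC; apply: connect_trans (inC y yC); rewrite csym; apply: inC.
have OC : O \in C by rewrite inE connect0.
case MS : (M \subset attr_closure D' (attr_sem A)).
  have h : M \subset attr_closure D0 (attr_sem A).
    by apply: subset_trans MS (entails_cl _ eD').
  by apply: subset_trans (OM M MC) (cl_trans h).
have fin : f \in aord by rewrite (perm_mem hperm) mem_enum (subsetP sA).
have kept := rr1_kept fin fH1.
exfalso; move/negP: kept; apply.
have anal : forall a, a \in A -> exists M' N',
    [/\ a = inr N', M' \in C, (M', N') \in arrows H1 & N' != N].
  move=> a aA; have := subsetP hRO a (subsetP sAR a aA).
  rewrite /rel_sort inE => /orP[/init_obj e|/imsetP[N' /bigcupP[M' M'C]]].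
    have OS : O \subset attr_closure D' (attr_sem A).
      by rewrite -e; apply: subset_trans (cl_sup _ _); exact: (bigcup_sup a aA).
    have : M \subset attr_closure D' (attr_sem A).
      by apply: subset_trans (connD' O M OC (inC M MC)) (cl_trans OS).
    by rewrite MS.
  rewrite inE => hM' ea; exists M', N'; split => //.
  by apply/eqP => eN'; move: aA; rewrite ea eN' => aA; rewrite aA in bA.
have NS : N \subset attr_closure D' (attr_sem A).
  have cS : fd_closed (FDg H1 :|: F) (attr_closure D' (attr_sem A)).
    apply/forall_inP => g gD; apply/implyP => g1.
    move: gD; rewrite /FDg !in_setU => /orP[/orP[/orP[/imsetP[p pA ep]|h]|h]|h].
    - case: (eqVneq p f) => [pf|pf].
        by move: g1; rewrite ep pf /= MS.
      apply: cl_fd g1; rewrite ep /D' /FDg !in_setU; apply/orP; left; apply/orP; left.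
      by apply/orP; left; apply/imsetP; exists p => //; rewrite /H' /= !inE pf pA.
    - apply: cl_fd g1; rewrite /D' /FDg !in_setU; apply/orP; left; apply/orP; left.
      by apply/orP; right; exact: h.
    - apply: cl_fd g1; rewrite /D' /FDg !in_setU; apply/orP; left; apply/orP; right.
      exact: h.
    - by apply: cl_fd g1; rewrite /D' in_setU h orbT.
  have e1 : entails (FDg H1 :|: F) D0.
    apply: entails_trans (@rr1_entails U F aord H0) (entails_sub _).
    by apply: setSU; apply: FDgE_sub.
  apply: subset_trans hb _; apply: subset_trans (entails_cl _ e1) _.
  exact: cl_min (cl_sup _ _) cS.
have NN : N \in nodes H1 by rewrite eN; exact: (H0_targets wfG wfF (subsetP sA _ fH1)).
have [a aA] : exists a, a \in A.
  case: (set_0Vmem A) => [A0|[a aA]]; last by exists a.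
  have : N \subset set0.
    by move: hb; rewrite /attr_sem A0 big_set0 /D0 (cl0 wfG wfF).
  rewrite subset0 => /eqP N0.
  by move: (H0_nodes wfG wfF (X := N)); rewrite -eN NN N0 eqxx => /(_ isT).
have semAM : attr_sem A \subset attr_closure D' M.
  apply/bigcupsP => a' a'A; have [M' [N' [-> M'C hM' nN']]] := anal a' a'A.
  apply: subset_trans (cl_fdin (arrD' _ _ hM' nN')) _.
  by apply: cl_trans; apply: connD' MC (connC _ _ MC M'C).
have NM : N \subset attr_closure D' M := subset_trans NS (cl_trans semAM).
have Mlhs : M \in [set g.1 | g in D'].
  have [M' [N' [_ M'C hM' nN']]] := anal a aA.
  case: (eqVneq M M') => [eMM|neq].
    by rewrite -eMM in hM'; apply/imsetP; exists (M, N') => //; apply: arrD'.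
  have /connectP[p pth e] := connC _ _ MC M'C.
  case: p pth e => [|y p] /=; first by move=> _ e; rewrite e eqxx in neq.
  move=> /andP[/andP[My yM] _] _.
  have yC : y \in C.
    by rewrite inE; apply: connect_trans (inC M MC) (connect1 _); rewrite /binrel My yM.
  apply/imsetP; exists (M, y) => //; apply: arrD' My _.
  by apply/eqP => ey; rewrite -ey yC in NC.
rewrite /gclosure /= !inE; apply/orP; right; apply/and3P; split.
- exact: Mlhs.
- by apply/orP; left; exact: NN.
- exact: NM.
Qed.
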